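(* For any oriented graph $G$, $\chi^*_o(G) \geq \frac{|V(G)|}{\alpha_o(G)}$.
   Context: An oriented graph is a finite directed graph with no directed cycle of length 1 or 2. For a set $S$ of $k$ colors, a $b$-fold oriented $k$-coloring of $G$ is a map $f$ from $V(G)$ to the $b$-element subsets of $S$ such that (i) $f(x)\cap f(y)=\emptyset$ for every arc $xy$, and (ii) for all arcs $xy, zw$, $f(x)\cap f(w)\neq\emptyset$ implies $f(y)\cap f(z)=\emptyset$. $\chi^b_o(G)$ is the minimum such $k$, and $\chi^*_o(G)=\lim_{b\to\infty}\chi^b_o(G)/b=\inf_{b\ge1}\chi^b_o(G)/b$. An oriented coloring is a $1$-fold oriented coloring (viewed as a map to colors). A set $I\subseteq V(G)$ is an oriented independent set if for every two distinct $x,y\in I$ there is an oriented coloring $f$ of $G$ with $f(x)=f(y)$. The oriented independence number $\alpha_o(G)$ is the maximum size of an oriented independent set. *)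

(* Defs.v *)
From HB Require Import structures.
From mathcomp Require Import all_boot all_order all_algebra.
From mathcomp Require Import boolp classical_sets reals.
Set Implicit Arguments. Unset Strict Implicit. Unset Printing Implicit Defensive.
Import Order.TTheory GRing.Theory Num.Theory.

Definition oriented (V : finType) (arc : rel V) : Prop :=
  (forall x, ~~ arc x x) /\ (forall x y, arc x y -> ~~ arc y x).

Definition bfold_oriented_coloring (V : finType) (arc : rel V) (b k : nat)
    (f : V -> {set 'I_k}) : Prop :=
  [/\ (forall x, #|f x| = b),
      (forall x y, arc x y -> f x :&: f y = finset.set0) &
      (forall x y z w, arc x y -> arc z w ->
         f x :&: f w != finset.set0 -> f y :&: f z = finset.set0)].

Definition has_bfold_coloring (V : finType) (arc : rel V) (b k : nat) : bool :=
  `[< exists f : V -> {set 'I_k}, bfold_oriented_coloring arc b f >].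

(* chi^b_o(G): least k admitting a b-fold oriented k-coloring
   (such a k always exists; the fallback 0 is never used). *)
Definition chi_b (V : finType) (arc : rel V) (b : nat) : nat :=
  match pselect (exists k, has_bfold_coloring arc b k) with
  | left ex => ex_minn ex
  | right _ => 0
  end.

Definition chi_star (R : realType) (V : finType) (arc : rel V) : R :=
  inf [set ((chi_b arc b)%:R / b%:R : R)%R | b in [set b : nat | (0 < b)%N]].

(* Oriented coloring (1-fold), colors taken in nat (any finite color set
   can be relabelled injectively into nat). *)
Definition oriented_coloring (V : finType) (arc : rel V) (c : V -> nat) : Prop :=
  (forall x y, arc x y -> c x <> c y) /\
  (forall x y z w, arc x y -> arc z w -> c x = c w -> c y <> c z).

Definition oriented_independent (V : finType) (arc : rel V) (I : {set V}) : Prop :=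
  forall x y, x \in I -> y \in I -> x <> y ->
    exists c, oriented_coloring arc c /\ c x = c y.

Definition alpha_o (V : finType) (arc : rel V) : nat :=
  \max_(I : {set V} | `[< oriented_independent arc I >]) #|I|.

(* Main.v *)
Require Import Defs.
From HB Require Import structures.
From mathcomp Require Import all_boot all_order all_algebra.
From mathcomp Require Import boolp classical_sets reals.
Import Order.TTheory GRing.Theory Num.Theory.
Local Open Scope ring_scope.

Section S.
Variables (V : finType) (arc : rel V).
Hypothesis Hor : oriented arc.

Lemma exists_coloring (b : nat) : exists k, has_bfold_coloring arc b k.
Proof.
exists #|{: V * 'I_b}|; apply/asboolP.
pose f (x : V) : {set 'I_#|{: V * 'I_b}|} := [set enum_rank (x, j) | j : 'I_b].
have disj x y : x != y -> f x :&: f y = finset.set0.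
  move=> nxy; apply/setP => i; rewrite !inE.
  apply/negbTE/negP => /andP[/imsetP[j _ ->] /imsetP[j' _]] /enum_rank_inj/(congr1 fst) /= E.
  by rewrite E eqxx in nxy.
exists f; split.
- move=> x; rewrite card_imset ?card_ord //.
  by move=> j j' /enum_rank_inj/(congr1 snd).
- move=> x y axy; apply: disj; apply/eqP => E; subst y.
  by case: Hor => H _; move: (H x); rewrite axy.
- move=> x y z w axy azw ne.
  have xw : x = w.
    apply/eqP; apply/negPn/negP => nxw; by rewrite (disj _ _ nxw) eqxx in ne.
  subst w; apply: disj; apply/eqP => E; subst z.
  by case: Hor => _ H; move: (H _ _ axy); rewrite azw.
Qed.

Lemma color_class_indep (b k : nat) (f : V -> {set 'I_k}) (c : 'I_k) :
  (0 < b)%N -> bfold_oriented_coloring arc b f ->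
  oriented_independent arc [set x | c \in f x].
Proof.
move=> b0 [Hc Hd Ht] x y; rewrite !inE => cx cy _.
have ne v : f v != finset.set0.
  by apply/eqP => E; move: (Hc v); rewrite E cards0 => E'; rewrite -E' in b0.
have irr v : ~~ arc v v by case: Hor.
have asym u v : arc u v -> ~~ arc v u by case: Hor => _ H; apply: H.
have inI u v : c \in f u -> c \in f v -> f u :&: f v != finset.set0.
  move=> cu cv; apply/set0Pn; exists c; by rewrite inE cu cv.
pose col (v : V) : nat := if c \in f v then 0%N else (enum_rank v).+1.
exists col; split; last by rewrite /col cx cy.
split.
- move=> u v auv; rewrite /col.
  case cu: (c \in f u); case cv: (c \in f v) => //.
  + by move: (inI _ _ cu cv); rewrite Hd // eqxx.
  + move=> [] /ord_inj/enum_rank_inj E; subst v; by move: (irr u); rewrite auv.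
- move=> u v z w auv azw; rewrite /col.
  case cu: (c \in f u); case cw: (c \in f w) => //.
  + move=> _. have D := Ht _ _ _ _ auv azw (inI _ _ cu cw).
    case cv: (c \in f v); case cz: (c \in f z) => //.
    * by move: (inI _ _ cv cz); rewrite D eqxx.
    * move=> [] /ord_inj/enum_rank_inj E; subst z.
      by move: (Ht _ _ _ _ auv azw (inI _ _ cu cw)); rewrite finset.setIid => E; move: (ne v); rewrite E eqxx.
  + move=> [] /ord_inj/enum_rank_inj E; subst w.
    have D := Ht _ _ _ _ auv azw; rewrite finset.setIid in D; have {}D := D (ne u).
    case cv: (c \in f v); case cz: (c \in f z) => //.
    * by move: (inI _ _ cv cz); rewrite D eqxx.
    * move=> [] /ord_inj/enum_rank_inj E; subst z.
      by move: (asym _ _ auv); rewrite azw.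
Qed.

Lemma count_bound (b k : nat) (f : V -> {set 'I_k}) :
  (0 < b)%N -> bfold_oriented_coloring arc b f ->
  (#|V| * b <= k * alpha_o arc)%N.
Proof.
move=> b0 Hf.
have E : (\sum_(c : 'I_k) #|[set x | c \in f x]| = #|V| * b)%N.
  transitivity (\sum_(c : 'I_k) \sum_(x : V) (c \in f x : nat))%N.
    apply: eq_bigr => c _; rewrite -sum1_card big_mkcond /=.
    by apply: eq_bigr => x _; rewrite inE; case: (c \in f x).
  rewrite exchange_big /=.
  transitivity (\sum_(x : V) b)%N; last by rewrite sum_nat_const.
  apply: eq_bigr => x _; case: Hf => Hc _ _; rewrite -(Hc x) -sum1_card.
  by rewrite [RHS]big_mkcond; apply: eq_bigr => c _ /=; case: (c \in f x).
rewrite -E -[X in (_ <= X * _)%N](card_ord k) -sum_nat_const.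
apply: leq_sum => c _.
apply: (leq_bigmax_cond (F := fun I : {set V} => #|I|)).
by apply/asboolP; apply: color_class_indep b0 Hf.
Qed.

End S.

Theorem theorem4 (R : realType) (V : finType) (arc : rel V) :
  oriented arc ->
  (#|V|%:R / (alpha_o arc)%:R : R) <= chi_star R arc.
Proof.
move=> Hor; apply: lb_le_inf.
  by exists ((chi_b arc 1)%:R / 1%:R); exists 1%N.
move=> _ [b /= b0 <-].
have : has_bfold_coloring arc b (chi_b arc b).
  rewrite /chi_b; case: pselect => [ex|nex]; last by case: nex; apply: exists_coloring.
  by case: ex_minnP.
move=> /asboolP [f Hf].
have := @count_bound V arc Hor b _ f b0 Hf.
clear f Hf; move: (chi_b arc b) (alpha_o arc) => k a.
case: (posnP a) => [->|a0] H.
  by rewrite invr0 mulr0 divr_ge0 ?ler0n.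
rewrite ler_pdivlMr ?ltr0n // mulrAC ler_pdivrMr ?ltr0n //.
by rewrite -!natrM ler_nat.
Qed.
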